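(* The probability that $\mathcal{X}$ is not $\delta$-sparse is at most \[ n^{16d\sqrt{k}+12}\cdot\left(\frac{n^4\delta}{\sigma}\right)^d. \]
   Context: Setting: positive integers $n,k,d$ with $k\le n$, $d\le n$; $\sigma>0$; adversarial $\mu_1,\ldots,\mu_n\in[0,1]^d$; $\mathcal{X}=\{x_1,\ldots,x_n\}$ with $x_i=\mu_i+g_i$, where the $g_i$ are independent $d$-dimensional Gaussian vectors with mean $0$ and independent coordinates of standard deviation $\sigma$. ($\sqrt{k}$ is treated as an integer.) A key-value is an expression $K=\frac{s}{t}\cdot\mathrm{cm}(S)$ with $s,t\in\mathbb{N}$, $s\le n^2$, $t<n$, and $S\subseteq\mathcal{X}$ a set of at most $4d\sqrt{k}$ points, where $\mathrm{cm}(S)$ is the center of mass of $S$; it is thus a formal linear combination of the data points. For key-values (or sums of key-values) $K,K'$, write $K\equiv K'$ iff they have identical coefficients for every data point. $\mathcal{X}$ is $\delta$-sparse if for all key-values $K_1,K_2,K_3,K_4$ with $\|K_1+K_2-K_3-K_4\|\le\delta$ we have $K_1+K_2\equiv K_3+K_4$. *)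

(* Defs.v *)
From HB Require Import structures.
From mathcomp Require Import all_boot all_order all_algebra.
From mathcomp Require Import all_classical all_reals all_analysis.
Set Implicit Arguments. Unset Strict Implicit. Unset Printing Implicit Defensive.
Import Order.TTheory GRing.Theory Num.Theory.
Local Open Scope classical_set_scope.
Local Open Scope ring_scope.

(* Mutual independence of a finite family of real random variables:
   each is measurable, and the product rule holds for every family of
   Borel sets (taking B i = setT recovers every subfamily). *)
Definition mutually_independent {dT : measure_display} {T : measurableType dT}
  {R : realType} (P : probability T R) {I : finType} (X : I -> T -> R) : Prop :=
  (forall i, measurable_fun setT (X i)) /\
  forall B : I -> set R, (forall i, measurable (B i)) ->
    P (\bigcap_(i in [set: I]) (X i @^-1` B i)) =
    (\prod_(i : I) P (X i @^-1` B i))%E.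

Definition data_points {R : realType} {T : Type} (n d : nat)
  (mu : 'I_n -> 'I_d -> R) (g : 'I_n * 'I_d -> T -> R) (w : T) : 'I_n -> 'I_d -> R :=
  fun i j => mu i j + g (i, j) w.

(* Coefficient vector (w.r.t. the data points) of the key-value (s/t) cm(S),
   S a set of data points given by their indices. *)
Definition kv_coef {R : realType} (n : nat) (s t : nat) (S : {set 'I_n}) : 'I_n -> R :=
  fun i => if i \in S then s%:R / (t%:R * #|S|%:R) else 0.

(* c is (the formal linear combination of) a key-value; sqrtk stands for sqrt k. *)
Definition is_keyvalue {R : realType} (n d sqrtk : nat) (c : 'I_n -> R) : Prop :=
  exists (s t : nat) (S : {set 'I_n}),
    [/\ (s <= n ^ 2)%N, (0 < t < n)%N, (0 < #|S| <= 4 * d * sqrtk)%N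
      & c = kv_coef s t S].

Definition lincomb {R : realType} (n d : nat) (c : 'I_n -> R)
  (x : 'I_n -> 'I_d -> R) : 'I_d -> R :=
  fun j => \sum_(i < n) c i * x i j.

Definition eucl_norm {R : realType} (d : nat) (v : 'I_d -> R) : R :=
  Num.sqrt (\sum_(j < d) v j ^+ 2).

Definition delta_sparse {R : realType} (n d sqrtk : nat) (delta : R)
  (x : 'I_n -> 'I_d -> R) : Prop :=
  forall c1 c2 c3 c4 : 'I_n -> R,
    is_keyvalue d sqrtk c1 -> is_keyvalue d sqrtk c2 ->
    is_keyvalue d sqrtk c3 -> is_keyvalue d sqrtk c4 ->
    eucl_norm (lincomb (fun i => c1 i + c2 i - c3 i - c4 i) x) <= delta ->
    (fun i => c1 i + c2 i) = (fun i => c3 i + c4 i).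

(* Main.v *)
Require Import Defs.
From HB Require Import structures.
From mathcomp Require Import all_boot all_order all_algebra.
From mathcomp Require Import all_classical all_reals all_analysis.
From mathcomp Require Import ring lra zify.
Set Implicit Arguments. Unset Strict Implicit. Unset Printing Implicit Defensive.
Import Order.TTheory GRing.Theory Num.Theory.

Lemma ffact_le_exp n j : n ^_ j <= n ^ j.
Proof.
elim: j => [|j IH]; first by rewrite ffactn0 expn0.
rewrite ffactnSr expnS mulnC; apply: leq_mul => //; exact: leq_subr.
Qed.

Lemma pow_le_fact_ffact (j e : nat) : e <= j -> j ^ e <= e`! * j ^_ e.
Proof.
elim: e => [|e IH] lee; first by rewrite expn0 fact0 ffactn0.
have IH' := IH (ltnW lee).
rewrite expnS factS ffactnSr.
have H : j <= e.+1 * (j - e) by nia.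
have := leq_mul H IH'.
move=> H2; apply: (leq_trans _ (leq_trans H2 _)); first by rewrite mulnC.
by rewrite !mulnA; nia.
Qed.

Lemma pow_le_fact j e : 2 * e <= j -> j ^ e <= j`!.
Proof.
move=> h; have lee : e <= j by lia.
rewrite -(ffact_fact lee).
apply: (leq_trans (pow_le_fact_ffact lee)).
rewrite mulnC leq_mul2l; apply/orP; right; apply: leq_fact; lia.
Qed.

Lemma term_bound n d m j : 0 < d -> 4 * d <= m -> 1 <= j -> j <= minn n m ->
  minn n m * ('C(n, j) * j ^ d) <= n ^ m.
Proof.
move=> d0 dm j1 jm.
have jn : j <= n by move: jm; rewrite leq_min => /andP[].
have jm' : j <= m by move: jm; rewrite leq_min => /andP[].
have n1 : 0 < n by lia.
have hC : 'C(n, j) * j`! <= n ^ j by rewrite bin_ffact ffact_le_exp.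
have hC1 : 'C(n, j) <= n ^ j.
  by apply: leq_trans hC; rewrite leq_pmulr // fact_gt0.
have mn : minn n m <= n by exact: geq_minl.
case: (leqP (j + d + 1) m) => hjd.
  have h1 : j ^ d <= n ^ d by rewrite leq_exp2r.
  apply: (@leq_trans (n * (n ^ j * n ^ d))).
    by apply: leq_mul => //; apply: leq_mul.
  rewrite -!expnD -expnS leq_pexp2l //; lia.
have key : minn n m * j ^ d <= j`! * n ^ (m - j).
  case: (ltnP j m) => hjm.
    have h2 : j ^ d <= j`! by apply: pow_le_fact; lia.
    have h3 : minn n m <= n ^ (m - j).
      apply: (leq_trans mn); rewrite -{1}(expn1 n) leq_pexp2l //; lia.
    by rewrite mulnC; apply: leq_mul.
  have -> : j = m by lia.
  have -> : m - m = 0 by lia.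
  rewrite expn0 muln1.
  have h2 : m ^ d.+1 <= m`! by apply: pow_le_fact; lia.
  apply: leq_trans h2; rewrite expnS; apply: leq_mul => //; exact: geq_minr.
rewrite mulnCA; apply: (leq_trans (leq_mul (leqnn 'C(n,j)) key)).
rewrite mulnA; apply: (leq_trans (leq_mul hC (leqnn _))).
rewrite -expnD; have -> : j + (m - j) = m by lia. by [].
Qed.

Lemma sum_card_pow n d m : 0 < d -> 4 * d <= m ->
  \sum_(S : {set 'I_n} | 0 < #|S| <= m) #|S| ^ d <= n ^ m.
Proof.
move=> d0 dm.
pose F j := if 0 < j <= m then j ^ d else 0.
have -> : \sum_(S : {set 'I_n} | 0 < #|S| <= m) #|S| ^ d =
          \sum_(S : {set 'I_n}) F #|S|.
  by rewrite big_mkcond /=; apply: eq_bigr => S _; rewrite /F; case: ifP.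
have -> : \sum_(S : {set 'I_n}) F #|S| =
          \sum_(j < n.+1) 'C(n, j) * F j.
  transitivity (\sum_(S : {set 'I_n}) \sum_(j < n.+1 | #|S| == j) F j).
    apply: eq_bigr => S _.
    have hS : #|S| < n.+1 by rewrite ltnS; have := max_card (mem S); rewrite card_ord.
    by rewrite (big_pred1 (Ordinal hS)) //= => j; rewrite eq_sym.
  under eq_bigr do rewrite big_mkcond /=.
  rewrite exchange_big /=; apply: eq_bigr => j _.
  rewrite -big_mkcond /= sum_nat_const /=.
  have := card_draws 'I_n j; rewrite card_ord => <-.
  by rewrite cardsE.
set m' := minn n m.
case: (posnP n) => [n0|npos].
  rewrite n0 big_ord_recl big_ord0 /F /=; lia.
have m'pos : 0 < m' by rewrite /m' leq_min npos; lia.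
rewrite -(leq_pmul2l m'pos) big_distrr /=.
apply: (@leq_trans (\sum_(j < n.+1) (if 0 < j <= m' then n ^ m else 0))).
  apply: leq_sum => j _.
  case: ifP => hj.
    move/andP: hj => [h1 h2]; rewrite /F; case: ifP => hF; last by rewrite muln0 muln0.
    exact: term_bound.
  rewrite /F; case: ifP => hF; last by rewrite muln0 muln0.
  have : n < j by move: hj hF; rewrite /m' leq_min; lia.
  by move=> nj; rewrite bin_small // mul0n muln0.
rewrite -big_mkcond /= sum_nat_const /=.
rewrite leq_mul2r; apply/orP; right.
pose f (j : 'I_m') : 'I_n.+1 := inord j.+1.
apply: (@leq_trans #|[set f j | j in 'I_m']|).
  apply: subset_leq_card; apply/fintype.subsetP => j; rewrite unfold_in => /andP[h1 h2].
  have hj : j.-1 < m' by lia.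
  apply/imsetP; exists (Ordinal hj) => //; apply: val_inj; rewrite /f /= inordK; lia.
by rewrite (leq_trans (leq_imset_card _ _)) ?card_ord.
Qed.

Lemma sum_kv n d m : 0 < d -> 4 * d <= m ->
  \sum_(x : 'I_(n ^ 2).+1 * 'I_n * {set 'I_n})
     (if (0 < x.1.2) && (0 < #|x.2| <= m) then (x.1.2 * #|x.2|) ^ d else 0)
  <= n ^ (m + 3 + d).
Proof.
move=> d0 dm.
rewrite -(pair_bigA _ (fun (a : 'I_(n ^ 2).+1 * 'I_n) (S : {set 'I_n}) =>
   if (0 < a.2) && (0 < #|S| <= m) then (a.2 * #|S|) ^ d else 0)) /=.
rewrite -(pair_bigA _ (fun (s : 'I_(n ^ 2).+1) (t : 'I_n) => \sum_(S : {set 'I_n})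
   if (0 < t) && (0 < #|S| <= m) then (t * #|S|) ^ d else 0)) /=.
have hS := sum_card_pow n d0 dm.
have ht : \sum_(t < n) t ^ d <= n.-1 * n ^ d.
  case: n {hS} => [|k]; first by rewrite big_ord0.
  rewrite big_ord_recl /= exp0n // add0n /=.
  apply: (@leq_trans (\sum_(i < k) k.+1 ^ d)).
    by apply: leq_sum => i _; rewrite leq_exp2r // ltnS ltnW.
  by rewrite sum_nat_const card_ord.
apply: (@leq_trans (\sum_(s < (n ^ 2).+1) \sum_(t < n) t ^ d * n ^ m)).
  apply: leq_sum => s _; apply: leq_sum => t _.
  case: (posnP t) => [t0|tpos].
    rewrite big1 // => S _; by rewrite t0.
  rewrite -(big_mkcond (fun S : {set 'I_n} => 0 < #|S| <= m)) /=.
  under eq_bigr do rewrite expnMn.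
  by rewrite -big_distrr /= leq_mul2l hS orbT.
rewrite sum_nat_const card_ord -big_distrl /=.
apply: (@leq_trans ((n ^ 2).+1 * (n.-1 * n ^ d * n ^ m))).
  by rewrite leq_mul2l leq_mul2r ht !orbT.
have h : (n ^ 2).+1 * n.-1 <= n ^ 3 by clear hS ht; case: n => // k; rewrite /=; nia.
rewrite !mulnA.
apply: (@leq_trans (n ^ 3 * n ^ d * n ^ m)); first by rewrite !leq_mul2r h !orbT.
by rewrite -!expnD; have -> : 3 + d + m = m + 3 + d by lia.
Qed.

Local Open Scope classical_set_scope.
Local Open Scope ring_scope.

Section Coef.
Variable R : realType.

Lemma ifdiv (b : bool) (s D : nat) :
  (if b then s%:R / D%:R else 0 : R) = (b * s)%N%:R / D%:R.
Proof. by case: b; rewrite ?mul1n ?mul0n ?mul0r. Qed.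

Lemma absdiff_ge1 (u v : nat) : u <> v -> 1 <= `|u%:R - v%:R : R|.
Proof.
move=> uv; case: (ltngtP u v) => h; last by [].
- rewrite distrC ger0_norm; last by rewrite subr_ge0 ler_nat ltnW.
  have : ((u + 1)%N%:R : R) <= v%:R by rewrite ler_nat addn1.
  rewrite natrD; lra.
- rewrite ger0_norm; last by rewrite subr_ge0 ler_nat ltnW.
  have : ((v + 1)%N%:R : R) <= u%:R by rewrite ler_nat addn1.
  rewrite natrD; lra.
Qed.

Lemma coef_lb (b1 b2 b3 b4 : bool) (s1 s2 s3 s4 D1 D2 D3 D4 : nat) :
  (0 < D1)%N -> (0 < D2)%N -> (0 < D3)%N -> (0 < D4)%N ->
  let c : R := (if b1 then s1%:R / D1%:R else 0) + (if b2 then s2%:R / D2%:R else 0)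
    - (if b3 then s3%:R / D3%:R else 0) - (if b4 then s4%:R / D4%:R else 0) in
  c != 0 -> ((D1 * D2 * D3 * D4)%N%:R)^-1 <= `|c|.
Proof.
move=> h1 h2 h3 h4 c cn0.
move: cn0; rewrite /c !ifdiv.
set A := (b1 * s1)%N; set B := (b2 * s2)%N; set C := (b3 * s3)%N; set E := (b4 * s4)%N.
set u := (A * D2 * D3 * D4 + B * D1 * D3 * D4)%N.
set v := (C * D1 * D2 * D4 + E * D1 * D2 * D3)%N.
have d1 : (D1%:R : R) != 0 by rewrite pnatr_eq0 -lt0n.
have d2 : (D2%:R : R) != 0 by rewrite pnatr_eq0 -lt0n.
have d3 : (D3%:R : R) != 0 by rewrite pnatr_eq0 -lt0n.
have d4 : (D4%:R : R) != 0 by rewrite pnatr_eq0 -lt0n.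
have M0 : (0 : R) < (D1 * D2 * D3 * D4)%N%:R by rewrite ltr0n !muln_gt0 h1 h2 h3 h4.
have -> : (A%:R / D1%:R + B%:R / D2%:R - C%:R / D3%:R - E%:R / D4%:R : R)
   = (u%:R - v%:R) / (D1 * D2 * D3 * D4)%N%:R.
  rewrite /u /v !natrD !natrM; field; rewrite ?mulf_neq0 // ?d1 ?d2 ?d3 ?d4; try by repeat split.
move=> cn0.
have uv : u <> v by move=> e; move: cn0; rewrite e subrr mul0r eqxx.
rewrite normrM normfV (gtr0_norm M0) -[X in X <= _]mul1r ler_pM2r ?invr_gt0 //.
exact: absdiff_ge1.
Qed.
End Coef.

Section Normal.
Variables (R : realType) (sigma : R).
Hypothesis sigma_gt0 : 0 < sigma.

Lemma peak_le : normal_peak sigma <= (2 * sigma)^-1.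
Proof.
rewrite /normal_peak lef_pV2 ?posrE ?sqrtr_gt0; last 2 first.
- by rewrite mulrn_wgt0 // mulr_gt0 ?pi_gt0 // exprn_gt0.
- by rewrite mulr_gt0.
have e : 2 * sigma = Num.sqrt ((2 * sigma) ^+ 2).
  by rewrite sqrtr_sqr ger0_norm // mulr_ge0 // ltW.
rewrite {1}e.
rewrite ler_sqrt; last by rewrite mulrn_wge0 // mulr_ge0 ?pi_ge0 // exprn_ge0 // ltW.
have := @pi_ge2 R; rewrite mulr2n; nra.
Qed.

Lemma normal_itv (a b : R) : a <= b ->
  (normal_prob 0 sigma `[a, b]%classic <= ((b - a) / (2 * sigma))%:E)%E.
Proof.
move=> ab; rewrite /normal_prob.
have mab : measurable (`[a, b]%classic : set R) by exact: measurable_itv.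
apply: (@le_trans _ _ (\int[lebesgue_measure]_(x in `[a, b]%classic) (cst (normal_peak sigma)%:E x))%E).
  apply: ge0_le_integral => //.
  - by move=> x _; rewrite lee_fin normal_pdf_ge0.
  - apply/measurable_realfun.measurable_EFinP; apply: measurable_funS (measurable_normal_pdf 0 sigma) => //.
  - by move=> x _; rewrite lee_fin normal_pdf_ub // gt_eqF.
rewrite integral_cst //.
have HL := lebesgue_measure_itv `[a, b]; rewrite /= in HL.
set L := (X in (_ * X)%E).
have -> : L = (if (a%:E < b%:E)%E then (b%:E + (- a)%:E)%E else 0) := HL.
case: ifPn => hab.
  rewrite -EFinD -EFinM lee_fin mulrC ler_wpM2l ?subr_ge0 //.
  exact: peak_le.
rewrite mule0 lee_fin; apply: mulr_ge0; first by rewrite subr_ge0.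
by rewrite invr_ge0 mulr_ge0 // ltW.
Qed.
End Normal.

Lemma lee_prod_le (R : realType) (I : Type) (s : seq I) (f h : I -> \bar R) :
  (forall i, (0 <= f i)%E) -> (forall i, (f i <= h i)%E) ->
  (\prod_(i <- s) f i <= \prod_(i <- s) h i)%E.
Proof.
move=> f0 fh; elim: s => [|x s IH]; first by rewrite !big_nil.
rewrite !big_cons; apply: lee_pmul => //; exact: prode_ge0.
Qed.

Section Core.
Variables (R : realType) (n d : nat) (sigma : R) (mu : 'I_n -> 'I_d -> R)
  (dT : measure_display) (T : measurableType dT) (P : probability T R)
  (g : 'I_n * 'I_d -> T -> R).
Hypothesis sigma_gt0 : 0 < sigma.
Hypothesis indep : mutually_independent P g.
Hypothesis gnorm : forall ij A, measurable A -> P (g ij @^-1` A) = normal_prob 0 sigma A.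

Lemma mpre ij (A : set R) : measurable A -> measurable (g ij @^-1` A).
Proof. move=> mA; have := indep.1 ij measurableT _ mA; by rewrite setTI. Qed.

Lemma prod_split (F : 'I_n * 'I_d -> \bar R) (i0 : 'I_n) :
  (\prod_(ij : 'I_n * 'I_d) F ij =
   (\prod_(j < d) F (i0, j)) * \prod_(i | i != i0) \prod_(j < d) F (i, j))%E.
Proof.
have -> : (\prod_(ij : 'I_n * 'I_d) F ij = \prod_(ij : 'I_n * 'I_d) F (ij.1, ij.2))%E.
  by apply: eq_bigr => -[].
rewrite -(pair_bigA _ (fun i j => F (i, j))) /=.
by rewrite (bigD1 i0).
Qed.

Variables (c : 'I_n -> R) (i0 : 'I_n) (delta eta : R).
Hypotheses (ci0 : c i0 != 0) (delta_ge0 : 0 <= delta) (eta_gt0 : 0 < eta).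

Definition Lc := \sum_i `|c i|.
Definition rr := delta + Lc * eta.
Definition Kc := rr / (`|c i0| * sigma).
Definition cellS (z : int) : set R := `[z%:~R * eta, (z + 1)%:~R * eta[%classic.
Definition Ylo (z : {ffun 'I_n * 'I_d -> int}) (j : 'I_d) :=
  \sum_(i | i != i0) c i * (mu i j + (z (i, j))%:~R * eta) + c i0 * mu i0 j.
Definition Jset z j : set R :=
  `[(- Ylo z j) / c i0 - rr / `|c i0|, (- Ylo z j) / c i0 + rr / `|c i0|]%classic.
Definition Cset z (ij : 'I_n * 'I_d) := if ij.1 == i0 then Jset z ij.2 else cellS (z ij).
Definition Rset z (ij : 'I_n * 'I_d) : set R := if ij.1 == i0 then setT else cellS (z ij).
Definition Bz z := \bigcap_(ij in [set: 'I_n * 'I_d]) (g ij @^-1` Cset z ij).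
Definition Rz z := \bigcap_(ij in [set: 'I_n * 'I_d]) (g ij @^-1` Rset z ij).
Definition validz (z : {ffun 'I_n * 'I_d -> int}) := [forall j, z (i0, j) == 0].
Definition Bk k := if @pickle_inv {ffun 'I_n * 'I_d -> int} k is Some z then
  (if validz z then Bz z else set0) else set0.
Definition Rk k := if @pickle_inv {ffun 'I_n * 'I_d -> int} k is Some z then
  (if validz z then Rz z else set0) else set0.

Lemma Lc_ge0 : 0 <= Lc. Proof. by apply: sumr_ge0 => i _. Qed.
Lemma rr_ge0 : 0 <= rr. Proof. by rewrite /rr addr_ge0 // mulr_ge0 ?Lc_ge0 // ltW. Qed.

Lemma mCset z ij : measurable (Cset z ij).
Proof. by rewrite /Cset; case: ifP => _; exact: measurable_itv. Qed.
Lemma mRset z ij : measurable (Rset z ij).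
Proof. by rewrite /Rset; case: ifP => _; [exact: measurableT | exact: measurable_itv]. Qed.

Lemma mBz z : measurable (Bz z).
Proof. apply: fin_bigcap_measurable; first exact: finite_finset.
by move=> ij _; apply: mpre; exact: mCset. Qed.
Lemma mRz z : measurable (Rz z).
Proof. apply: fin_bigcap_measurable; first exact: finite_finset.
by move=> ij _; apply: mpre; exact: mRset. Qed.

Lemma mBk k : measurable (Bk k).
Proof. rewrite /Bk; case: pickle_inv => [z|] //; case: ifP => _ //; exact: mBz. Qed.
Lemma mRk k : measurable (Rk k).
Proof. rewrite /Rk; case: pickle_inv => [z|] //; case: ifP => _ //; exact: mRz. Qed.

Lemma PJ z j : (P (g (i0, j) @^-1` Jset z j) <= Kc%:E)%E.
Proof.
rewrite gnorm; last exact: measurable_itv.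
apply: le_trans (normal_itv sigma_gt0 _) _.
  have h : 0 <= rr / `|c i0| by rewrite divr_ge0 ?rr_ge0.
  lra.
rewrite lee_fin /Kc.
have ca : 0 < `|c i0| by rewrite normr_gt0.
rewrite le_eqVlt; apply/orP; left; apply/eqP; field; rewrite ci0 gt_eqF // gt_eqF //.
Qed.

Lemma PBz_le z : (P (Bz z) <= (Kc ^+ d)%:E * P (Rz z))%E.
Proof.
rewrite /Bz /Rz (indep.2 _ (mCset z)) (indep.2 _ (mRset z)) !(prod_split _ i0).
have e1 : (\prod_(j < d) P (g (i0, j) @^-1` Rset z (i0, j)) = 1)%E.
  rewrite big1 // => j _; rewrite /Rset /= eqxx preimage_setT; exact: probability_setT.
rewrite e1 mul1e.
have e2 : (\prod_(i | i != i0) \prod_(j < d) P (g (i, j) @^-1` Cset z (i, j)) =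
           \prod_(i | i != i0) \prod_(j < d) P (g (i, j) @^-1` Rset z (i, j)))%E.
  apply: eq_bigr => i hi; apply: eq_bigr => j _; by rewrite /Cset /Rset /= (negbTE hi).
rewrite e2; apply: lee_wpmul2r.
  by apply: prode_ge0 => i _; apply: prode_ge0.
have -> : (Kc ^+ d)%:E = (\prod_(j < d) Kc%:E)%E.
  by rewrite prodEFin prodr_const card_ord.
apply: lee_prod_le => [j|j]; first exact: measure_ge0.
rewrite /Cset /= eqxx; exact: PJ.
Qed.

Lemma Kc_ge0 : 0 <= Kc.
Proof. by rewrite /Kc divr_ge0 ?rr_ge0 // mulr_ge0 // ltW. Qed.

Lemma Bk_le k : (P (Bk k) <= (Kc ^+ d)%:E * P (Rk k))%E.
Proof.
rewrite /Bk /Rk; case: pickle_inv => [z|]; last by rewrite measure0 mule0.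
case: ifP => _; [exact: PBz_le | by rewrite measure0 mule0].
Qed.

Lemma floor_cell (x : R) (z : int) : x \in `[z%:~R * eta, (z + 1)%:~R * eta[ ->
  Num.floor (x / eta) = z.
Proof.
rewrite in_itv /= => /andP[h1 h2]; apply: floor_def.
by rewrite ler_pdivlMr // ltr_pdivrMr // h1 h2.
Qed.

Lemma Rk_triv : trivIset setT Rk.
Proof.
move=> i j _ _ [w [Hi Hj]].
move: Hi Hj; rewrite /Rk.
case ei: (pickle_inv i) => [z|] //; case vz: (validz z) => // Hi.
case ej: (pickle_inv j) => [z'|] //; case vz': (validz z') => // Hj.
have zz : z = z'.
  apply/ffunP => -[i1 j1].
  case: (eqVneq i1 i0) => [->|hne].
    by move/forallP: vz => /(_ j1) /eqP ->; move/forallP: vz' => /(_ j1) /eqP ->.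
  have h1 := Hi (i1, j1) I; have h2 := Hj (i1, j1) I.
  rewrite /Rset /= (negbTE hne) /cellS /= in h1 h2.
  by rewrite -(floor_cell h1) -(floor_cell h2).
have := @pickle_invK {ffun 'I_n * 'I_d -> int} i; rewrite ei /= => <-.
have := @pickle_invK {ffun 'I_n * 'I_d -> int} j; rewrite ej /= => <-.
by rewrite zz.
Qed.

Lemma cover (A : set T) :
  A `<=` [set w | forall j, `|\sum_i c i * (mu i j + g (i, j) w)| <= delta] ->
  A `<=` \bigcup_k Bk k.
Proof.
move=> AE w /AE Hw.
pose z := [ffun ij : 'I_n * 'I_d => if ij.1 == i0 then 0 else Num.floor (g ij w / eta)].
exists (pickle z) => //.
rewrite /Bk pickleK_inv.
have -> : validz z by apply/forallP => j; rewrite /z ffunE /= eqxx.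
have zfl i j : i != i0 -> 0 <= g (i, j) w - (z (i, j))%:~R * eta < eta.
  move=> hi; rewrite /z ffunE /= (negbTE hi).
  have /andP[f1 f2] := floor_itv (g (i, j) w / eta).
  rewrite ler_pdivlMr // in f1; rewrite ltr_pdivrMr // in f2.
  rewrite intrD mulrDl mul1r in f2.
  apply/andP; split; lra.
move=> [i1 j1] _ /=.
rewrite /Cset /=.
case: (eqVneq i1 i0) => [e|hne]; last first.
  rewrite /cellS /= in_itv /=.
  have /andP[h1 h2] := zfl i1 j1 hne.
  rewrite intrD mulrDl mul1r.
  apply/andP; split; lra.
subst i1.
rewrite /Jset /= in_itv /= -ler_distlC.
set a := c i0; set y := g (i0, j1) w.
have Hs := Hw j1.
have hsplit : \sum_i c i * (mu i j1 + g (i, j1) w) =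
   (a * y + Ylo z j1) + \sum_(i | i != i0) c i * (g (i, j1) w - (z (i, j1))%:~R * eta).
  rewrite (bigD1 i0) //= /Ylo.
  have -> : \sum_(i | i != i0) c i * (mu i j1 + g (i, j1) w) =
     \sum_(i | i != i0) c i * (mu i j1 + (z (i, j1))%:~R * eta) +
     \sum_(i | i != i0) c i * (g (i, j1) w - (z (i, j1))%:~R * eta).
    rewrite -big_split /=; apply: eq_bigr => i _; ring.
  rewrite /a /y; ring.
have bnd : `|\sum_(i | i != i0) c i * (g (i, j1) w - (z (i, j1))%:~R * eta)| <= Lc * eta.
  apply: le_trans (ler_norm_sum _ _ _) _.
  apply: (@le_trans _ _ (\sum_(i | i != i0) `|c i| * eta)).
    apply: ler_sum => i hi; rewrite normrM ler_wpM2l //.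
    have /andP[h1 h2] := zfl i j1 hi.
    by rewrite ger0_norm // ltW.
  rewrite /Lc big_distrl /= [X in _ <= X](bigD1 i0) //=.
  by rewrite lerDr mulr_ge0 // ltW.
have key : `|a * y + Ylo z j1| <= rr.
  rewrite hsplit in Hs.
  set S := \sum_(i | i != i0) _ in Hs bnd.
  have := ler_normB (a * y + Ylo z j1 + S) S.
  rewrite addrK => h.
  rewrite /rr; apply: le_trans h _; exact: lerD.
have ca : 0 < `|a| by rewrite normr_gt0.
have -> : - Ylo z j1 / a - y = - (a * y + Ylo z j1) / a.
  by rewrite /a; field; rewrite ci0.
by rewrite normrM normrN normfV ler_pdivrMr // -mulrA mulVf ?gt_eqF // mulr1.
Qed.

Lemma core_bound (A : set T) : measurable A ->
  A `<=` [set w | forall j, `|\sum_i c i * (mu i j + g (i, j) w)| <= delta] ->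
  (P A <= (Kc ^+ d)%:E)%E.
Proof.
move=> mA AE.
apply: le_trans (measure_sigma_subadditive P (F:=Bk) mBk mA (cover AE)) _.
apply: le_trans (@lee_nneseries _ _ (fun k => (Kc ^+ d)%:E * P (Rk k))%E xpredT 0 _ _) _.
- by move=> k _ _; exact: measure_ge0.
- by move=> k _; exact: Bk_le.
rewrite nneseriesZl; last by move=> k _; exact: measure_ge0.
have mU : measurable (\bigcup_k Rk k) by exact: bigcupT_measurable mRk.
rewrite -measure_semi_bigcup //; [| exact: mRk | exact: Rk_triv].
rewrite -[X in (_ <= X)%E]mule1; apply: lee_wpmul2l.
  by rewrite lee_fin exprn_ge0 // Kc_ge0.
exact: probability_le1.
Qed.

End Core.

Lemma pow_step (R : realType) (a b x : R) (d : nat) : 0 <= a -> 0 <= b -> 0 <= x -> x <= 1 ->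
  (a + b * x) ^+ d <= a ^+ d + x * (d%:R * (a + b) ^+ d).
Proof.
move=> a0 b0 x0 x1; elim: d => [|d IH]; first by rewrite !expr0 mul0r mulr0 addr0.
set A := a ^+ d in IH *; set S := (a + b) ^+ d in IH *; set Y := (a + b * x) ^+ d in IH *.
have A0 : 0 <= A by rewrite exprn_ge0.
have AS : A <= S by rewrite /A /S lerXn2r ?nnegrE ?addr_ge0 // lerDl.
have Y0 : 0 <= Y by rewrite exprn_ge0 // addr_ge0 // mulr_ge0.
have dd0 : 0 <= (d%:R : R) by [].
rewrite !exprS -/A -/S -/Y -natr1.
set dd := (d%:R : R) in dd0 IH *.
have h1 : (a + b * x) * Y <= (a + b * x) * (A + x * (dd * S)).
  by rewrite ler_wpM2l // addr_ge0 // mulr_ge0.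
apply: le_trans h1 _.
have S0 : 0 <= S := le_trans A0 AS.
have hb : b * x * A <= x * ((a + b) * S).
  have h2 : b * A <= (a + b) * S by apply: ler_pM => //; rewrite lerDr.
  have := ler_wpM2l x0 h2; move=> h3; apply: le_trans h3; rewrite le_eqVlt; apply/orP; left; apply/eqP; ring.
have hc : b * x * (x * (dd * S)) <= dd * b * S * x.
  have p : 0 <= dd * b * S * x by rewrite !mulr_ge0.
  have := ler_wpM2l p x1; rewrite mulr1 => h; apply: le_trans h.
  rewrite le_eqVlt; apply/orP; left; apply/eqP; ring.
have e : (a + b * x) * (A + x * (dd * S)) =
  a * A + x * (dd * (a * S)) + b * x * A + b * x * (x * (dd * S)) by ring.
rewrite e.
have e2 : a * A + x * ((dd + 1) * ((a + b) * S)) =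
  a * A + x * (dd * (a * S)) + x * ((a + b) * S) + dd * b * S * x by ring.
rewrite e2 -!addrA lerD2l lerD2l; apply: lerD => //.
Qed.

Lemma pow_lim (R : realType) (p a b : R) (d : nat) : 0 <= a -> 0 <= b ->
  (forall eta, 0 < eta -> p <= (a + b * eta) ^+ d) -> p <= a ^+ d.
Proof.
move=> a0 b0 H; apply/ler_addgt0Pr => e e0.
set M := d%:R * (a + b) ^+ d.
have M0 : 0 <= M by rewrite mulr_ge0 // exprn_ge0 // addr_ge0.
pose eta := Num.min 1 (e / (M + 1)).
have eta0 : 0 < eta by rewrite lt_min ltr01 divr_gt0 // ltr_wpDl.
have eta1 : eta <= 1 by rewrite ge_min lexx.
have etae : eta <= e / (M + 1) by rewrite ge_min lexx orbT.
apply: le_trans (H eta eta0) _.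
apply: le_trans (pow_step d a0 b0 (ltW eta0) eta1) _.
rewrite lerD2l.
have : eta * (M + 1) <= e by rewrite -ler_pdivlMr // ltr_wpDl.
move=> h; apply: le_trans h; rewrite ler_wpM2l //; [exact: ltW | rewrite -/M; lra].
Qed.

Section Ev.
Variables (R : realType) (n d : nat) (sigma : R) (mu : 'I_n -> 'I_d -> R)
  (dT : measure_display) (T : measurableType dT) (P : probability T R)
  (g : 'I_n * 'I_d -> T -> R).
Hypothesis sigma_gt0 : 0 < sigma.
Hypothesis indep : mutually_independent P g.
Hypothesis gnorm : forall ij A, measurable A -> P (g ij @^-1` A) = normal_prob 0 sigma A.

Lemma event_bound (c : 'I_n -> R) (i0 : 'I_n) (delta : R) (A : set T) :
  c i0 != 0 -> 0 <= delta -> measurable A ->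
  A `<=` [set w | forall j, `|\sum_i c i * (mu i j + g (i, j) w)| <= delta] ->
  (P A <= ((delta / (`|c i0| * sigma)) ^+ d)%:E)%E.
Proof.
move=> ci0 d0 mA AE.
have fA : P A \is a fin_num.
  by rewrite ge0_fin_numE ?measure_ge0 // (le_lt_trans (probability_le1 P mA)) ?ltry.
rewrite -(fineK fA) lee_fin.
have ca : 0 < `|c i0| * sigma by rewrite mulr_gt0 // normr_gt0.
apply: (@pow_lim _ _ _ ((\sum_i `|c i|) / (`|c i0| * sigma))).
- by rewrite divr_ge0 // ltW.
- by rewrite divr_ge0 ?sumr_ge0 // ltW.
move=> eta eta0.
have := core_bound sigma_gt0 indep gnorm (eta := eta) ci0 d0 eta0 mA AE.
rewrite -(fineK fA) lee_fin /Kc /rr /Lc.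
move=> h; apply: le_trans h _; rewrite le_eqVlt; apply/orP; left; apply/eqP.
congr (_ ^+ _); field; by rewrite gt_eqF // normr_eq0.
Qed.
End Ev.

Section Main.
Variables (R : realType) (n d sqrtk : nat) (sigma delta : R) (mu : 'I_n -> 'I_d -> R)
  (dT : measure_display) (T : measurableType dT) (P : probability T R)
  (g : 'I_n * 'I_d -> T -> R).
Hypothesis sigma_gt0 : 0 < sigma.
Hypothesis delta_ge0 : 0 <= delta.
Hypothesis indep : mutually_independent P g.
Hypothesis gnorm : forall ij A, measurable A -> P (g ij @^-1` A) = normal_prob 0 sigma A.

Definition mm := (4 * d * sqrtk)%N.
Definition KV := ('I_(n ^ 2).+1 * 'I_n * {set 'I_n})%type.
Definition kvc (x : KV) : 'I_n -> R := kv_coef x.1.1 x.1.2 x.2.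
Definition validkv (x : KV) := (0 < x.1.2)%N && (0 < #|x.2| <= mm)%N.
Definition wN (x : KV) : nat := if validkv x then ((x.1.2 * #|x.2|) ^ d)%N else 0%N.
Definition o0 : 'I_4 := @Ordinal 4 0 isT.
Definition o1 : 'I_4 := @Ordinal 4 1 isT.
Definition o2 : 'I_4 := @Ordinal 4 2 isT.
Definition o3 : 'I_4 := @Ordinal 4 3 isT.
Definition cq (q : {ffun 'I_4 -> KV}) : 'I_n -> R :=
  fun i => kvc (q o0) i + kvc (q o1) i - kvc (q o2) i - kvc (q o3) i.
Definition goodq (q : {ffun 'I_4 -> KV}) :=
  [forall a, validkv (q a)] && [exists i, cq q i != 0].
Definition Ev q := [set w | eucl_norm (lincomb (cq q) (data_points mu g w)) <= delta].
Definition Gq q := if goodq q then Ev q else set0.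

Lemma kv_of (c : 'I_n -> R) : is_keyvalue d sqrtk c -> exists x : KV, validkv x /\ c = kvc x.
Proof.
move=> [s [t [S [hs /andP[t0 tn] hS ->]]]].
have hs' : (s < (n ^ 2).+1)%N by rewrite ltnS.
exists (Ordinal hs', Ordinal tn, S); split => //.
by rewrite /validkv /= t0.
Qed.

Lemma kv_to (x : KV) : validkv x -> is_keyvalue d sqrtk (kvc x).
Proof.
move=> /andP[t0 hS]; exists x.1.1, x.1.2, x.2; split => //.
- by rewrite -ltnS.
- by rewrite t0 ltn_ord.
Qed.

Lemma nonsparse_eq :
  [set w | ~ delta_sparse sqrtk delta (data_points mu g w)] = \bigcup_(q in setT) Gq q.
Proof.
apply/seteqP; split => w /=.
- move=> ns; apply: contrapT => hn; apply: ns => c1 c2 c3 c4 k1 k2 k3 k4 hle.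
  apply: contrapT => hneq; apply: hn.
  have [x1 [v1 e1]] := kv_of k1; have [x2 [v2 e2]] := kv_of k2.
  have [x3 [v3 e3]] := kv_of k3; have [x4 [v4 e4]] := kv_of k4.
  pose q := [ffun a : 'I_4 => nth x1 [:: x1; x2; x3; x4] a].
  have qc : cq q = (fun i => c1 i + c2 i - c3 i - c4 i).
    by apply/funext => i; rewrite /cq !ffunE /= e1 e2 e3 e4.
  exists q => //; rewrite /Gq.
  have -> : goodq q.
    apply/andP; split.
      apply/forallP => a; rewrite ffunE.
      by case: a => -[|[|[|[|a]]]] //= _.
    apply/existsP; apply: contrapT => hall; apply: hneq.
    apply/funext => i; apply/eqP; rewrite -subr_eq0.
    have : ~~ (cq q i != 0) by apply/negP => h; apply: hall; exists i.
    by rewrite negbK qc /= opprD addrA.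
  by rewrite /Ev /= qc.
- move=> [q _]; rewrite /Gq; case: ifP => // /andP[/forallP hv /existsP [i hi]] hev hs.
  have := hs (kvc (q o0)) (kvc (q o1)) (kvc (q o2)) (kvc (q o3))
    (kv_to (hv o0)) (kv_to (hv o1)) (kv_to (hv o2)) (kv_to (hv o3)) hev.
  move/(congr1 (fun f => f i)) => /= /eqP; rewrite -subr_eq0.
  by move: hi; rewrite /cq opprD addrA => /negbTE ->.
Qed.

Lemma prod4 (F : 'I_4 -> R) : \prod_(a < 4) F a = F o0 * F o1 * F o2 * F o3.
Proof.
rewrite !big_ord_recl big_ord0 mulr1 !mulrA.
congr (_ * _ * _ * _); congr F; exact: val_inj.
Qed.

Lemma mEv q : measurable (Ev q).
Proof.
pose f w := \sum_(j < d) (\sum_i cq q i * (mu i j + g (i, j) w)) ^+ 2.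
have mf : measurable_fun setT f.
  apply: measurable_sum => j; apply: measurable_realfun.measurable_funX.
  apply: measurable_sum => i; apply: measurable_realfun.measurable_funM.
    exact: measurable_cst.
  apply: measurable_realfun.measurable_funD; first exact: measurable_cst.
  exact: indep.1.
have -> : Ev q = f @^-1` `]-oo, delta ^+ 2]%classic.
  have e : delta = Num.sqrt (delta ^+ 2) by rewrite sqrtr_sqr ger0_norm.
  apply/seteqP; split => w /=; rewrite /Ev /eucl_norm /lincomb /data_points in_itv /= /f.
    by rewrite {1}e ler_sqrt // sqr_ge0.
  by rewrite {2}e ler_sqrt // sqr_ge0.
have := mf measurableT _ (measurable_itv `]-oo, delta ^+ 2]); by rewrite setTI.
Qed.

Lemma Ev_sub q :
  Ev q `<=` [set w | forall j, `|\sum_i cq q i * (mu i j + g (i, j) w)| <= delta].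
Proof.
move=> w; rewrite /Ev /eucl_norm /lincomb /data_points /= => h j.
apply: le_trans h; rewrite -sqrtr_sqr ler_sqrt; last by apply: sumr_ge0 => k _; exact: sqr_ge0.
rewrite (bigD1 j) //= lerDl; apply: sumr_ge0 => k _; exact: sqr_ge0.
Qed.

Lemma Gq_bound q : (P (Gq q) <=
  (if goodq q then (delta / sigma) ^+ d * \prod_(a < 4) ((wN (q a))%:R : R) else 0)%:E)%E.
Proof.
rewrite /Gq; case: ifP => hg; last by rewrite measure0.
move: (hg) => /andP[/forallP hv /existsP [i hi]].
have EB := event_bound sigma_gt0 indep gnorm hi delta_ge0 (@mEv q) (@Ev_sub q).
apply: (le_trans EB).
rewrite lee_fin.
pose D := fun a => (((q a).1.2 : nat) * #|(q a).2|)%N.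
have Dpos a : (0 < D a)%N.
  by move: (hv a) => /andP[t0 /andP[s0 _]]; rewrite muln_gt0 t0 s0.
have wE a : ((wN (q a))%:R : R) = ((D a)%:R ^+ d : R) by rewrite /wN hv natrX.
rewrite prod4 !wE.
set M := (D o0 * D o1 * D o2 * D o3)%N.
have hc : cq q i =
  (if i \in (q o0).2 then ((q o0).1.1 : nat)%:R / (D o0)%:R else 0) +
  (if i \in (q o1).2 then ((q o1).1.1 : nat)%:R / (D o1)%:R else 0) -
  (if i \in (q o2).2 then ((q o2).1.1 : nat)%:R / (D o2)%:R else 0) -
  (if i \in (q o3).2 then ((q o3).1.1 : nat)%:R / (D o3)%:R else 0).
  by rewrite /cq /kvc /kv_coef /D !natrM.
have cl : (M%:R)^-1 <= `|cq q i|.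
  have H := @coef_lb R (i \in (q o0).2) (i \in (q o1).2) (i \in (q o2).2) (i \in (q o3).2)
    ((q o0).1.1) ((q o1).1.1) ((q o2).1.1) ((q o3).1.1) (D o0) (D o1) (D o2) (D o3)
    (Dpos o0) (Dpos o1) (Dpos o2) (Dpos o3).
  simpl in H; rewrite -hc in H; exact: H hi.
have MN : (0 < M)%N := ltn_mul (ltn_mul (ltn_mul (Dpos o0) (Dpos o1)) (Dpos o2)) (Dpos o3).
have M0 : (0 : R) < M%:R by rewrite ltr0n.
have c0 : 0 < `|cq q i| by rewrite normr_gt0.
have ci : `|cq q i|^-1 <= M%:R.
  by rewrite -(invrK (M%:R)) lef_pV2 ?posrE ?invr_gt0.
have base : delta / (`|cq q i| * sigma) <= delta / sigma * M%:R.
  have -> : delta / (`|cq q i| * sigma) = delta / sigma * `|cq q i|^-1.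
    by field; rewrite !gt_eqF.
  by rewrite ler_wpM2l // divr_ge0 // ltW.
have hpow : (delta / (`|cq q i| * sigma)) ^+ d <= (delta / sigma * M%:R) ^+ d.
  rewrite lerXn2r // nnegrE.
    by rewrite divr_ge0 // mulr_ge0 // ltW.
  by rewrite mulr_ge0 // ?divr_ge0 // ltW.
apply: le_trans hpow _.
by rewrite exprMn /M !natrM !exprMn !mulrA.
Qed.

Hypothesis d0 : (0 < d)%N.
Hypothesis sq0 : (0 < sqrtk)%N.

Lemma sumW : \sum_(y : KV) ((wN y)%:R : R) <= ((n ^ (mm + 3 + d))%N)%:R.
Proof.
rewrite -natr_sum ler_nat.
have h : (4 * d <= mm)%N by rewrite /mm leq_pmulr.
exact: (sum_kv n d0 h).
Qed.

Lemma total_bound :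
  (P [set w | ~ delta_sparse sqrtk delta (data_points mu g w)] <=
   ((delta / sigma) ^+ d * (((n ^ (mm + 3 + d))%N)%:R) ^+ 4)%:E)%E.
Proof.
rewrite nonsparse_eq.
pose N := #|{ffun 'I_4 -> KV}|.
pose F (j : nat) : set T :=
  if @insub nat (fun j => (j < N)%N) 'I_N j is Some i then Gq (enum_val i) else set0.
have cover : \bigcup_(q in setT) Gq q `<=` \big[setU/set0]_(j < N) F j.
  move=> w [q _ hw]; rewrite -bigcup_mkord; exists (enum_rank q : nat).
    by rewrite /= ltn_ord.
  by rewrite /F valK enum_rankK.
have mF : forall j, `I_N j -> measurable (F j).
  move=> j _; rewrite /F; case: insub => [i|] //; rewrite /Gq; case: ifP => // _.
  exact: mEv.
have mU : measurable (\bigcup_(q in setT) Gq q).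
  apply: fin_bigcup_measurable; first exact: finite_finset.
  by move=> q _; rewrite /Gq; case: ifP => // _; exact: mEv.
apply: le_trans (@content_subadditive _ _ _ P _ _ _ mF mU cover) _.
have -> : (\sum_(j < N) P (F j) = \sum_(j < N) P (Gq (enum_val j)))%E.
  by apply: eq_bigr => j _; rewrite /F valK.
rewrite /N -(big_enum_val (fun q => P (Gq q))) /=.
have step : (\sum_(x in {ffun 'I_4 -> KV}) P (Gq x) <=
   \sum_(x in {ffun 'I_4 -> KV}) ((if goodq x then (delta / sigma) ^+ d *
    \prod_(a < 4) ((wN (x a))%:R : R) else 0)%:E))%E.
  by apply: lee_sum => q _; exact: Gq_bound.
apply: le_trans step _.
rewrite sumEFin lee_fin.
have dsig : 0 <= (delta / sigma) ^+ d by rewrite exprn_ge0 // divr_ge0 // ltW.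
apply: (@le_trans _ _ (\sum_(q in {ffun 'I_4 -> KV})
    (delta / sigma) ^+ d * \prod_(a < 4) ((wN (q a))%:R : R))).
  apply: ler_sum => q _; case: ifP => _ //.
  by rewrite mulr_ge0 // prodr_ge0.
rewrite -big_distrr /= ler_wpM2l //.
have -> : \sum_(q in {ffun 'I_4 -> KV}) \prod_(a < 4) ((wN (q a))%:R : R) =
          \prod_(a < 4) \sum_(y : KV) ((wN y)%:R : R).
  rewrite (bigA_distr_bigA (fun (a : 'I_4) (y : KV) => ((wN y)%:R : R))).
  by apply: eq_bigl => q; rewrite inE.
rewrite prodr_const card_ord lerXn2r // ?nnegrE ?sumW //.
by apply: sumr_ge0 => y _.
Qed.

End Main.

Unset Implicit Arguments.

Theorem lemma11 (R : realType) (n k d sqrtk : nat) (sigma delta : R)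
  (mu : 'I_n -> 'I_d -> R)
  (dT : measure_display) (T : measurableType dT) (P : probability T R)
  (g : 'I_n * 'I_d -> T -> R) :
  (0 < k)%N -> (k <= n)%N -> (0 < d)%N -> (d <= n)%N -> k = (sqrtk ^ 2)%N ->
  0 < sigma -> 0 <= delta ->
  (forall i j, 0 <= mu i j <= 1) ->
  mutually_independent P g ->
  (forall ij A, measurable A -> P (g ij @^-1` A) = normal_prob 0 sigma A) ->
  (P [set w | ~ delta_sparse sqrtk delta (data_points mu g w)] <=
    ((n%:R) ^+ (16 * d * sqrtk + 12) * ((n%:R) ^+ 4 * delta / sigma) ^+ d)%:E)%E.
Proof.
move=> k0 kn d0 dn ksq sig0 del0 hmu indep gnorm.
have sq0 : (0 < sqrtk)%N by move: k0; rewrite ksq expn_gt0 orbF.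
have TB := total_bound mu sig0 del0 indep gnorm d0 sq0.
apply: le_trans TB _; rewrite lee_fin le_eqVlt; apply/orP; left; apply/eqP.
rewrite /mm natrX.
set x : R := n%:R.
have e1 : x ^+ (4 * d * sqrtk + 3 + d) ^+ 4 = x ^+ (16 * d * sqrtk + 12) * x ^+ (4 * d).
  rewrite -exprM -exprD; congr (_ ^+ _); lia.
have e2 : (x ^+ 4 * delta / sigma) ^+ d = x ^+ (4 * d) * (delta / sigma) ^+ d.
  by rewrite -mulrA exprMn -exprM.
rewrite e1 e2; ring.
Qed.
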